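(* Let $\bm X$ have standard exponential margins and follow a block geometric extremal graphical model relative to a block graph $\mathcal G=(V,E)$ with gauge $g$. For distinct $i,j\in V$, let $i=v_0,v_1,\dots,v_m=j$ be the vertices of the unique shortest path from $i$ to $j$. Then $$g_{\{i,j\}}(x_i,x_j)=\min_{x_{v_1},\dots,x_{v_{m-1}}\ge0}\Big\{\sum_{k=1}^{m}g_{\{v_{k-1},v_k\}}(x_{v_{k-1}},x_{v_k})-\sum_{k=1}^{m-1}x_{v_k}\Big\},$$ i.e. $g_{\{i,j\}}$ is the bivariate marginal of the chain geometric extremal graphical model on the path vertices $v_0,\dots,v_m$ with bivariate gauges $g_{\{v_{k-1},v_k\}}$.
   Context: $\bm X=(X_k:k\in V)$ has a Lebesgue density $f$ and continuous gauge $g:[0,\infty)^d\to[0,\infty)$ with $-\log f(t\bm x_t)/t\to g(\bm x)$ whenever $\bm x_t\to\bm x\in[0,\infty)^d$; marginal gauges $g_J(\bm x_J)=\min_{x_k\ge0,\,k\notin J}g(\bm x)$, which satisfy $g_J\ge\max_{j\in J}x_j$. Block graph: connected decomposable graph with cliques $C_1,\dots,C_N$ ordered by the running intersection property, whose separators $D_k=C_k\cap\bigcup_{l<k}C_l$ are single vertices; the path vertices $v_1,\dots,v_{m-1}$ are separators. Block geometric extremal graphical model: $g(\bm x)=\sum_k g_{C_k}(\bm x_{C_k})-\sum_{k=2}^Nx_{D_k}$. *)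

(* Defs.v *)
From HB Require Import structures.
From mathcomp Require Import all_boot all_order all_algebra.
From mathcomp Require Import all_classical all_reals all_analysis.
Set Implicit Arguments. Unset Strict Implicit. Unset Printing Implicit Defensive.
Import Order.TTheory GRing.Theory Num.Theory.
Import numFieldNormedType.Exports.
Local Open Scope classical_set_scope.
Local Open Scope ring_scope.

Section Defs.
Variable R : realType.
Variable V : finType.

Definition orthant (x : V -> R) : Prop := forall k, 0 <= x k.

Definition cont_nonneg_on_orthant (g : (V -> R) -> R) : Prop :=
  (forall x, orthant x -> 0 <= g x) /\
  (forall x, orthant x -> forall eps : R, 0 < eps -> exists2 delta : R, 0 < delta &
     forall y, orthant y -> (forall k, `|y k - x k| < delta) -> `|g y - g x| < eps).

(* g is the gauge of the (Lebesgue) density f: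
   -log f(t x_t)/t -> g(x) as t -> oo, whenever x_t -> x in [0,oo)^d
   (coordinatewise convergence = convergence in R^d, V finite). *)
Definition gauge_of (f : (V -> R) -> R) (g : (V -> R) -> R) : Prop :=
  forall (x : V -> R) (xt : R -> V -> R),
    orthant x -> (forall t, orthant (xt t)) ->
    (forall k, (fun t => xt t k) @ +oo --> x k) ->
    (\forall t \near +oo, 0 < f (t *: xt t)) /\
    (fun t => - ln (f (t *: xt t)) / t) @ +oo --> g x.

(* marginal gauge g_J(x_J) = min_{x_k >= 0, k \notin J} g(x);
   represented as a function of the full vector x, depending only on x_J *)
Definition marg (g : (V -> R) -> R) (J : {set V}) (x : V -> R) : R :=
  inf (g @` [set y : V -> R | orthant y /\ (forall k, k \in J -> y k = x k)]).

(* standard exponential margins, at the level of gauges: g_{k}(x_k) = x_k *)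
Definition std_exp_margins (g : (V -> R) -> R) : Prop :=
  forall k x, orthant x -> marg g [set k] x = x k.

Local Close Scope classical_set_scope.

Definition simple_graph (e : rel V) : Prop :=
  symmetric e /\ irreflexive e.

Definition connected_graph (e : rel V) : Prop := forall u v, connect e u v.

Definition is_clique (e : rel V) (C : {set V}) : Prop :=
  forall u v, u \in C -> v \in C -> u != v -> e u v.

Definition is_max_clique (e : rel V) (C : {set V}) : Prop :=
  is_clique e C /\ forall w, w \notin C -> ~ is_clique e (w |: C).

(* the k-th clique of the ordering (0-based) *)
Definition clq (cs : seq {set V}) (k : nat) : {set V} := nth finset.set0 cs k.

Definition sep (cs : seq {set V}) (k : nat) : {set V} :=
  clq cs k :&: \bigcup_(l < k) clq cs l.

Definition block_graph (e : rel V) (cs : seq {set V}) : Prop :=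
  [/\ simple_graph e /\ connected_graph e,
      uniq cs,
      (forall C, C \in cs <-> is_max_clique e C),
      (forall k, (0 < k < size cs)%N ->
          exists2 l, (l < k)%N & sep cs k \subset clq cs l) &
      (forall k, (0 < k < size cs)%N -> #|sep cs k| = 1%N)].

Definition block_GEGM (cs : seq {set V}) (g : (V -> R) -> R) : Prop :=
  forall x, orthant x ->
    g x = \sum_(k < size cs) marg g (clq cs k) x
          - \sum_(1 <= k < size cs) \sum_(v in sep cs k) x v.

(* p is (the tail of) a shortest path i = v_0, v_1, ..., v_m = j, m = size p *)
Definition shortest_path (e : rel V) (i j : V) (p : seq V) : Prop :=
  [/\ path e i p, last i p = j &
      forall q, path e i q -> last i q = j -> (size p <= size q)%N].

Definition chain_obj (g : (V -> R) -> R) (i : V) (p : seq V) (y : V -> R) : R :=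
  let v := fun k => nth i (i :: p) k in
  \sum_(1 <= k < (size p).+1) marg g [set v k.-1; v k] y
  - \sum_(1 <= k < size p) y (v k).

End Defs.

(* Main.v *)
Require Import Defs.
From HB Require Import structures.
From mathcomp Require Import all_boot all_order all_algebra.
From mathcomp Require Import all_classical all_reals all_analysis.
From mathcomp Require Import zify.
Import Order.TTheory GRing.Theory Num.Theory.
Set Implicit Arguments. Unset Strict Implicit.
Local Open Scope classical_set_scope.
Local Open Scope ring_scope.

Section Anal.
Variables (R : realType) (V : finType) (g : (V -> R) -> R).
Hypothesis gc : cont_nonneg_on_orthant g.
Hypothesis gm : std_exp_margins g.

Definition agree (J : {set V}) (x y : V -> R) := forall k, k \in J -> y k = x k.

Lemma marg_le J x y : orthant y -> agree J x y -> marg g J x <= g y.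
Proof.
move=> oy ay; rewrite /marg; apply: ge_inf; last by exists y.
exists 0 => r [z [oz _] <-]; exact: gc.1.
Qed.

Lemma marg_min J x y : orthant y -> agree J x y ->
  (forall z, orthant z -> agree J x z -> g y <= g z) -> marg g J x = g y.
Proof.
move=> oy ay ym; apply/eqP; rewrite eq_le marg_le //=.
apply: lb_le_inf; first by exists (g y), y.
by move=> r [z [oz az] <-]; exact: ym.
Qed.

Lemma g_ge x v : orthant x -> x v <= g x.
Proof. by move=> ox; rewrite -(gm v ox); apply: marg_le => // k. Qed.


Section Compact.
Import numFieldNormedType.Exports.
Local Notation PT := (prod_topology (fun _ : V => R)).

Lemma near_coord (x : PT) (k : V) (d : R) : 0 < d ->
  \forall y \near x, `|y k - x k| < d.
Proof.
move=> d0.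
have hb : nbhs (x k) (ball (x k) d) := @nbhsx_ballx R R^o (x k) d d0.
have := @proj_continuous V (fun _ => R) k x _ hb.
move=> h; apply: (@filterS PT (nbhs x) (@nbhs_filter PT x) _ _ _ h) => y /=.
by rewrite /proj -ball_normE /= distrC.
Qed.

Lemma g_cont_within (A : set PT) : A `<=` (@orthant R V) ->
  {within A, continuous (g : PT -> R)}.
Proof.
move=> AO; apply/(@subspace_continuousP _ A R^o) => x Ax.
apply/(@cvgrPdist_lt R R^o) => eps eps0.
have [d d0 hd] := gc.2 x (AO _ Ax) eps eps0.
have H : \forall y \near x, forall k, `|y k - x k| < d.
  apply: (@filter_forall PT V (fun k (y : PT) => `|y k - x k| < d) (nbhs x) (@nbhs_filter PT x)) => k.
  exact: near_coord.
rewrite /within /=.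
apply: (@filterS PT (nbhs x) (@nbhs_filter PT x) _ _ _ H) => y hy Ay.
by rewrite distrC; apply: hd => //; exact: AO.
Qed.

Lemma marg_attain J x : orthant x ->
  exists y, [/\ orthant y, agree J x y & g y = marg g J x].
Proof.
move=> ox.
pose M := g x.
pose B := fun v : V => if v \in J then [set x v] else `[0, M]%classic : set R.
pose A := [set f : PT | forall v, B v (f v)].
have xA : A x.
  move=> v; rewrite /B; case: ifP => _ //=.
  by rewrite in_itv /= ox g_ge.
have AO : A `<=` (@orthant R V).
  move=> f Af v; have := Af v; rewrite /B; case: ifP => _ /=.
    by move=> ->; exact: ox.
  by rewrite in_itv /= => /andP[].
have A0 : A !=set0 by exists x.
have cA : compact A.
  apply: (@tychonoff V (fun _ => R) B) => v; rewrite /B; case: ifP => _.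
    exact: compact_set1.
  exact: segment_compact.
have [c cA' cmin] := compact_EVT_min (A0 : A !=set0) cA (@g_cont_within A AO).
rewrite inE in cA'.
have ac : agree J x c.
  by move=> k kJ; have := cA' k; rewrite /B kJ.
exists c; split => //; first exact: AO.
symmetry; apply: marg_min => //; first exact: AO.
move=> z oz az.
have [zA|zA] := pselect (A z).
  by apply: cmin; rewrite inE.
have [v] : exists v, ~ B v (z v).
  by apply/existsNP => H; apply: zA.
rewrite /B; case: ifP => vJ /=.
  by rewrite az.
rewrite in_itv /= oz /= => /negP; rewrite -ltNge => Mz.

have h1 : g c <= g x by apply: cmin; rewrite inE.
have h2 := @g_ge z v oz.
rewrite /M in Mz.
exact: (le_trans h1 (ltW (lt_le_trans Mz h2))).
Qed.

End Compact.

Lemma marg_local J x x' : agree J x x' -> marg g J x = marg g J x'.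
Proof.
move=> axx; rewrite /marg; congr (inf (g @` _)).
apply/funext => y; apply/propext; split=> -[oy ay]; split=> // k kJ.
  by rewrite ay // axx.
by rewrite ay // axx.
Qed.

Lemma marg_mono (J K : {set V}) x : J \subset K -> orthant x -> marg g J x <= marg g K x.
Proof.
move=> JK ox; have [y [oy ay <-]] := marg_attain K ox.
apply: marg_le => // k kJ; apply: (ay k); exact: (fintype.subsetP JK k kJ).
Qed.

Section Swap.
Variables (cs : seq {set V}) (w : V) (side : pred V).
Hypothesis gb : block_GEGM cs g.
Hypothesis Hside : forall k, (k < size cs)%N ->
  (forall v, v \in clq cs k -> v != w -> side v) \/
  (forall v, v \in clq cs k -> v != w -> ~~ side v).

Definition mix (y y' : V -> R) : V -> R :=
  fun v => if (v == w) || side v then y v else y' v.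

Lemma mix_orthant y y' : orthant y -> orthant y' -> orthant (mix y y').
Proof. by move=> oy oy' v; rewrite /mix; case: ifP. Qed.

Lemma mix_pt y y' v : mix y y' v + mix y' y v = y v + y' v.
Proof. by rewrite /mix; case: ifP => _ //; rewrite addrC. Qed.

Lemma swap y y' : orthant y -> orthant y' -> y w = y' w ->
  g (mix y y') + g (mix y' y) = g y + g y'.
Proof.
move=> oy oy' yw.
have o1 := @mix_orthant y y' oy oy'; have o2 := @mix_orthant y' y oy' oy.
rewrite (gb o1) (gb o2) (gb oy) (gb oy').
set S := fun z : V -> R => \sum_(1 <= k < size cs) \sum_(v in sep cs k) z v.
have HS : S (mix y y') + S (mix y' y) = S y + S y'.
  rewrite /S -!big_split /=; apply: eq_bigr => k _.
  rewrite -!big_split /=; apply: eq_bigr => v _; exact: mix_pt.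
have HM : \sum_(k < size cs) marg g (clq cs k) (mix y y') +
          \sum_(k < size cs) marg g (clq cs k) (mix y' y) =
          \sum_(k < size cs) marg g (clq cs k) y +
          \sum_(k < size cs) marg g (clq cs k) y'.
  rewrite -!big_split /=; apply: eq_bigr => -[k hk] _ /=.
  case: (Hside hk) => H.
    have e1 : marg g (clq cs k) (mix y y') = marg g (clq cs k) y.
      apply: marg_local => v vC; rewrite /mix.
      by case: eqP => [->|/eqP nw] //=; rewrite H.
    have e2 : marg g (clq cs k) (mix y' y) = marg g (clq cs k) y'.
      apply: marg_local => v vC; rewrite /mix.
      by case: eqP => [->|/eqP nw] //=; rewrite H.
    by rewrite e1 e2.
  have e1 : marg g (clq cs k) (mix y y') = marg g (clq cs k) y'.
    apply: marg_local => v vC; rewrite /mix.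
    by case: eqP => [->|/eqP nw] //=; rewrite (negbTE (H v vC nw)).
  have e2 : marg g (clq cs k) (mix y' y) = marg g (clq cs k) y.
    apply: marg_local => v vC; rewrite /mix.
    by case: eqP => [->|/eqP nw] //=; rewrite (negbTE (H v vC nw)).
  by rewrite e1 e2 addrC.
rewrite -/(S y) -/(S y') -/(S (mix y y')) -/(S (mix y' y)).
by rewrite addrACA HM -opprD HS opprD addrACA.
Qed.

Lemma sepE (J K : {set V}) (z : V -> R) : orthant z -> w \in J -> w \in K ->
  (forall v, v \in J -> (v == w) || side v) ->
  (forall v, v \in K -> (v == w) || ~~ side v) ->
  marg g (J :|: K) z + z w = marg g J z + marg g K z.
Proof.
move=> oz wJ wK HJ HK; apply/eqP; rewrite eq_le; apply/andP; split.
- have [yJ [oJ aJ <-]] := marg_attain J oz.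
  have [yK [oK aK <-]] := marg_attain K oz.
  have ew : yJ w = yK w by rewrite aJ // aK.
  have h1 : marg g (J :|: K) z <= g (mix yJ yK).
    apply: marg_le; first exact: mix_orthant.
    move=> v; rewrite inE => /orP[vJ|vK]; rewrite /mix.
      by case/orP: (HJ v vJ) => -> //; rewrite ?orbT aJ.
    case/orP: (HK v vK) => [/eqP->|ns]; first by rewrite eqxx /= aJ.
    by rewrite (negbTE ns) orbF; case: eqP => [->|_]; [rewrite aJ|rewrite aK].
  have h2 : z w <= g (mix yK yJ).
    have -> : z w = mix yK yJ w by rewrite /mix eqxx /= aK.
    by apply: g_ge; exact: mix_orthant.
  by rewrite -swap //; exact: lerD.
- have [y [oy ay <-]] := marg_attain (J :|: K) oz.
  have [u [ou au gu]] := marg_attain [set w] oz.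
  have gw : g u = z w by rewrite gu (gm w oz).
  have ew : y w = u w by rewrite ay ?inE ?wJ // au ?inE.
  have h1 : marg g J z <= g (mix y u).
    apply: marg_le; first exact: mix_orthant.
    move=> v vJ; rewrite /mix.
    by case/orP: (HJ v vJ) => -> //; rewrite ?orbT ay // inE vJ.
  have h2 : marg g K z <= g (mix u y).
    apply: marg_le; first exact: mix_orthant.
    move=> v vK; rewrite /mix.
    case/orP: (HK v vK) => [/eqP->|ns]; first by rewrite eqxx /= au ?inE.
    by rewrite (negbTE ns) orbF; case: eqP => [->|_]; [rewrite au ?inE|rewrite ay // inE vK orbT].
  by rewrite -gw -swap //; exact: lerD.
Qed.

End Swap.
End Anal.

Local Close Scope classical_set_scope.
Section Graph.
Variables (V : finType) (e : rel V) (cs : seq {set V}).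
Hypothesis hb : block_graph e cs.
Local Notation N := (size cs).
Variable v0 : V.

Definition dsep k : V := odflt v0 [pick v in sep cs k].

Lemma sep1 k : (0 < k < N)%N -> sep cs k = [set dsep k].
Proof.
move=> hk; case: hb => _ _ _ _ /(_ k hk) /eqP /cards1P [x hx].
rewrite hx /dsep hx; case: pickP => [y /set1P -> //|/(_ x)].
by rewrite set11.
Qed.

Lemma dsep_sep k : (0 < k < N)%N -> dsep k \in sep cs k.
Proof. by move=> hk; rewrite sep1 // set11. Qed.

Lemma dsep_clq k : (0 < k < N)%N -> dsep k \in clq cs k.
Proof. by move=> /dsep_sep; rewrite /sep => /setIP []. Qed.

Lemma dsep_earlier k : (0 < k < N)%N -> exists2 l, (l < k)%N & dsep k \in clq cs l.
Proof.
move=> /dsep_sep; rewrite /sep => /setIP [] _ /bigcupP [l _ hl].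
by exists l.
Qed.

Lemma clq_inter l k v : (l < k)%N -> (k < N)%N ->
  v \in clq cs l -> v \in clq cs k -> v = dsep k.
Proof.
move=> lk kN vl vk.
have hk : (0 < k < N)%N by rewrite kN andbT (leq_ltn_trans _ lk).
have : v \in sep cs k.
  rewrite /sep inE vk /=; apply/bigcupP; exists (Ordinal lk) => //.
by rewrite sep1 // => /set1P.
Qed.

Definition kf (v : V) : nat := find (fun C : {set V} => v \in C) cs.

Lemma kf_le v k : (k < N)%N -> v \in clq cs k -> (kf v <= k)%N.
Proof.
move=> kN vk; rewrite leqNgt; apply/negP => hlt.
have := @before_find _ finset.set0 (fun C : {set V} => v \in C) cs k hlt.
by rewrite -/(clq cs k) vk.
Qed.

Lemma kf_in v k : (k < N)%N -> v \in clq cs k ->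
  (kf v < N)%N /\ v \in clq cs (kf v).
Proof.
move=> kN vk; have kfN : (kf v < N)%N := leq_ltn_trans (kf_le kN vk) kN.
split => //; rewrite /clq /kf.
by apply: (nth_find finset.set0 (a := fun C : {set V} => v \in C)); rewrite has_find.
Qed.

Lemma kf_dsep_lt k : (0 < k < N)%N -> (kf (dsep k) < k)%N.
Proof.
move=> hk; have [l lk hl] := dsep_earlier hk.
have lN : (l < N)%N by apply: ltn_trans lk _; case/andP: hk.
exact: leq_ltn_trans (kf_le lN hl) lk.
Qed.

Fixpoint beta (w : V) (n k : nat) : option nat :=
  if n is n'.+1 then
    if (0 < k < N)%N then
      (if dsep k == w then Some k else beta w n' (kf (dsep k)))
    else None
  else None.

Definition B w k := beta w k.+1 k.

Lemma beta_fuel w n n' k : (k < n)%N -> (k < n')%N -> beta w n k = beta w n' k.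
Proof.
elim: n n' k => [|n IH] [|n'] k //= hn hn'.
case: ifP => hk //; case: ifP => _ //.
have := kf_dsep_lt hk => hlt.
by apply: IH; apply: leq_trans hlt _.
Qed.

Lemma B_eq w k : (0 < k < N)%N ->
  B w k = if dsep k == w then Some k else B w (kf (dsep k)).
Proof.
move=> hk; rewrite {1}/B /= hk; case: ifP => // _.
rewrite /B; apply: beta_fuel => //; exact: (kf_dsep_lt hk).
Qed.

Lemma B_out w k : ~~ (0 < k < N)%N -> B w k = None.
Proof. by move=> hk; rewrite /B /= (negbTE hk). Qed.

Lemma B_clq w k v : (k < N)%N -> v \in clq cs k -> v != w -> B w (kf v) = B w k.
Proof.
move=> kN vk vw; have [kfN vkf] := kf_in kN vk.
case: (ltngtP (kf v) k) => [lt||->] //.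
- have dv := clq_inter lt kN vkf vk.
  have hk : (0 < k < N)%N by rewrite kN andbT (leq_ltn_trans _ lt).
  rewrite (B_eq w hk) -dv (negbTE vw); done.
- by move=> lt; have := kf_le kN vk; rewrite leqNgt lt.
Qed.

Lemma B_some w k l : B w k = Some l -> [/\ (l <= k)%N, (0 < l < N)%N & dsep l = w].
Proof.
elim/ltn_ind: k => k IH.
case hk: (0 < k < N)%N; last by rewrite B_out ?hk.
rewrite B_eq //; case: eqP => [<- [<-]|ne] //.
move/IH => [] //; first exact: kf_dsep_lt.
move=> lle lN dl; split => //.
by apply: leq_trans lle _; apply: ltnW; exact: kf_dsep_lt.
Qed.

Lemma B_kf_w w k : (k < N)%N -> w \in clq cs k -> B w (kf w) = None.
Proof.
move=> kN wk; have [kfN win] := kf_in kN wk.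
case E: (B w (kf w)) => [l|] //.
have [lle hl dl] := B_some E.
have lN : (l < N)%N by case/andP: hl.
have wl : w \in clq cs l by rewrite -dl dsep_clq.
have ll : l = kf w by apply/eqP; rewrite eqn_leq lle kf_le.
rewrite ll in hl dl.
have [l' l'lt hl'] := dsep_earlier hl.
rewrite dl in hl'.
have := kf_le (ltn_trans l'lt kfN) hl'.
by rewrite leqNgt l'lt.
Qed.

Lemma B_other w k : (k < N)%N -> w \in clq cs k -> k != kf w -> B w k = Some k.
Proof.
move=> kN wk kk; have [kfN win] := kf_in kN wk.
have lt : (kf w < k)%N by rewrite ltn_neqAle eq_sym kk kf_le.
have dw := clq_inter lt kN win wk.
have hk : (0 < k < N)%N by rewrite kN andbT (leq_ltn_trans _ lt).
by rewrite B_eq // -dw eqxx.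
Qed.

Lemma B_neq w k1 k2 : (k1 < N)%N -> (k2 < N)%N -> w \in clq cs k1 ->
  w \in clq cs k2 -> k1 != k2 -> B w k1 != B w k2.
Proof.
move=> k1N k2N w1 w2 k12.
case: (eqVneq k1 (kf w)) => [e1|h1]; case: (eqVneq k2 (kf w)) => [e2|h2].
- by rewrite e1 e2 eqxx in k12.
- by rewrite e1 (B_kf_w k1N w1) (B_other k2N w2 h2).
- by rewrite e2 (B_kf_w k2N w2) (B_other k1N w1 h1).
- by rewrite (B_other k1N w1 h1) (B_other k2N w2 h2).
Qed.

Definition is_cliqueb (C : {set V}) :=
  [forall a, forall b, (a \in C) ==> (b \in C) ==> (a != b) ==> e a b].

Lemma is_cliqueP C : reflect (is_clique e C) (is_cliqueb C).
Proof.
apply: (iffP forallP) => [H a b aC bC ab|H a].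
  by have /forallP/(_ b) := H a; rewrite aC bC ab.
by apply/forallP => b; apply/implyP => aC; apply/implyP => bC; apply/implyP; exact: H.
Qed.

Lemma edge_clq u x : e u x -> exists2 k, (k < N)%N & (u \in clq cs k) && (x \in clq cs k).
Proof.
move=> eux; case: hb => [[[esy eirr] _] _ hcl _ _].
pose P C := [&& is_cliqueb C, u \in C & x \in C].
have P0 : P [set u; x].
  rewrite /P !inE !eqxx orbT /= andbT; apply/is_cliqueP => a b.
  rewrite !inE => /orP[]/eqP-> /orP[]/eqP->; rewrite ?eqxx //.
  by rewrite esy.
case: (@arg_maxnP _ [set u; x] P (fun C => #|C|) P0) => C /and3P [cC uC xC] Cmax.
have mC : is_max_clique e C.
  split; first exact/is_cliqueP.
  move=> w wC /is_cliqueP wcl.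
  have : P (w |: C) by rewrite /P wcl !inE uC xC !orbT.
  move/Cmax; rewrite cardsU1 wC /=.
  by rewrite ltnn.
have : C \in cs by apply/hcl.
move=> Ccs; exists (index C cs); first by rewrite index_mem.
by rewrite /clq nth_index // uC xC.
Qed.

End Graph.

Section PathF.
Variables (V : finType) (e : rel V) (i j : V) (p : seq V).
Hypothesis sp : shortest_path e i j p.
Local Notation vt t := (nth i (i :: p) t).
Local Notation m := (size p).

Lemma P_edge t : (t < m)%N -> e (vt t) (vt t.+1).
Proof. by case: sp => /(pathP i) H _ _ /H. Qed.

Lemma P_last : vt m = j.
Proof. by case: sp => _ <- _; rewrite (last_nth i). Qed.

Lemma P_uniq : uniq (i :: p).
Proof.
case: sp => pp lp hmin; apply/negPn/negP => nu.
move: lp; case: (shortenP pp) => p' pp' u' sub' lp'.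
have := hmin p' pp' lp'.
have h1 : #|i :: p'| = size (i :: p') by apply/card_uniqP.
have h2 : (#|i :: p'| <= #|i :: p|)%N.
  apply: subset_leq_card; apply/fintype.subsetP => x.
  by rewrite !inE => /orP[->//|/sub' ->]; rewrite orbT.
have h3 : (#|i :: p| < size (i :: p))%N.
  by rewrite ltn_neqAle card_size andbT; apply/eqP => /card_uniqP; apply/negP.
move: h2 h3; rewrite h1 /= => h2 h3 h4.
have := leq_ltn_trans h2 h3; rewrite ltnS => h5.
by have := leq_ltn_trans h4 h5; rewrite ltnn.
Qed.

Lemma P_nonadj t : (t.+2 <= m)%N -> ~~ e (vt t) (vt t.+2).
Proof.
case: sp => pp lp hmin hm; apply/negP => hE.
have ep : p = take t p ++ nth i p t :: nth i p t.+1 :: drop t.+2 p.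
  rewrite -(drop_nth i (n := t.+1)) // -(drop_nth i (n := t)) ?cat_take_drop //.
  exact: ltnW.
set a := take t p in ep; set x2 := nth i p t.+1 in ep hE.
set r := drop t.+2 p in ep.
have la : last i a = vt t.
  rewrite /a (last_nth i) size_take.
  case: ifP => [_|/negbT]; last by rewrite -leqNgt => h; have := leq_trans hm h; rewrite ltnNge leqnSn.
  case: t {hm hE ep a x2 r} => [//|t] /=.
  by rewrite nth_take.
have pq : path e i (a ++ x2 :: r).
  rewrite cat_path; move: pp; rewrite {1}ep cat_path la => /andP[-> /=].
  by case/and3P => _ _ ->; rewrite hE.
have lq : last i (a ++ x2 :: r) = j by rewrite -lp [in RHS]ep !last_cat.
have := hmin _ pq lq.
rewrite [in X in (X <= _)%N]ep !size_cat /=.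
by rewrite leq_add2l ltnn.
Qed.

End PathF.

Section Main.
Local Open Scope ring_scope.
Variables (R : realType) (V : finType) (e : rel V) (cs : seq {set V})
  (g : (V -> R) -> R) (i j : V) (p : seq V).
Hypotheses (gc : cont_nonneg_on_orthant g) (gm : std_exp_margins g)
  (hb : block_graph e cs) (gb : block_GEGM cs g) (ij : i != j)
  (sp : shortest_path e i j p).
Local Notation vt t := (nth i (i :: p) t).
Local Notation m := (size p).

Definition Pset t : {set V} := [set x | x \in take t.+1 (i :: p)].
Definition chainT t (y : V -> R) :=
  \sum_(1 <= k < t.+1) marg g [set vt k.-1; vt k] y - \sum_(1 <= k < t) y (vt k).

Lemma m_pos : (0 < m)%N.
Proof.
case: sp => _ lp _; move: lp; case: (p) => [/= ji|//].
by move: ij; rewrite ji eqxx.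
Qed.

Lemma vt_neq r t : (r <= m)%N -> (t <= m)%N -> r != t -> vt r != vt t.
Proof. by move=> rm tm rt; rewrite nth_uniq ?(P_uniq sp). Qed.

Lemma inPset t x : x \in Pset t -> exists2 r, (r <= t)%N & x = vt r.
Proof.
rewrite inE => xt; have xs := mem_take xt.
exists (index x (i :: p)); last by rewrite nth_index.
by rewrite in_take // in xt.
Qed.

Lemma vt_Pset r t : (r <= t)%N -> (t <= m)%N -> vt r \in Pset t.
Proof.
move=> rt tm; have rm : (r < size (i :: p))%N by apply: leq_ltn_trans rt _.
by rewrite inE in_take ?mem_nth // index_uniq // (P_uniq sp).
Qed.

Lemma Pset_succ t : (t < m)%N -> Pset t.+1 = Pset t :|: [set vt t; vt t.+1].
Proof.
move=> tm; have ht := vt_Pset (leqnn t) (ltnW tm); rewrite finset.in_set in ht.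
apply/setP => x; rewrite finset.in_setU /Pset !finset.in_set.
rewrite (take_nth i (n := t.+1) (s := i :: p)) // mem_rcons in_cons !finset.in_set1.
case: (x =P vt t) => [->|_]; first by rewrite ht orbT.
by rewrite /= orbC.
Qed.

Lemma Pset1 : Pset 1 = [set vt 0; vt 1].
Proof.
apply/setP => x; rewrite /Pset finset.in_set finset.in_set2.
have := m_pos; case: (p) => [//|x1 p'] _ /=.
by rewrite !in_cons take0 in_nil orbF.
Qed.

Lemma chainT_succ t y : (0 < t)%N ->
  chainT t.+1 y = chainT t y + marg g [set vt t; vt t.+1] y - y (vt t).
Proof.
move=> t0; rewrite /chainT (big_nat_recr t.+1) //.
rewrite [X in _ - X](big_nat_recr t) //=.
by rewrite opprD addrACA addrA.
Qed.

Lemma side_const t r : (t.+1 < m)%N -> (r <= t)%N ->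
  B cs i (vt t.+1) (kf cs (vt r)) = B cs i (vt t.+1) (kf cs (vt 0)).
Proof.
move=> tm; elim: r => [//|r IH] hr.
have rm : (r < m)%N by lia.
have [k kN /andP[a b]] := edge_clq hb (P_edge sp rm).
have n1 : vt r.+1 != vt t.+1 by apply: vt_neq; lia.
have n2 : vt r != vt t.+1 by apply: vt_neq; lia.
rewrite (B_clq hb i kN b n1) -(B_clq hb i kN a n2) IH //; lia.
Qed.

Lemma key y : orthant y -> forall t, (0 < t <= m)%N -> marg g (Pset t) y = chainT t y.
Proof.
move=> oy; elim => [//|t IH] /andP[_ ht].
case: t IH ht => [|t] IH ht.
  by rewrite Pset1 /chainT big_nat1 big_geq // subr0.
have tm : (t.+1 < m)%N by lia.
have IH' : marg g (Pset t.+1) y = chainT t.+1 y by apply: IH; lia.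
rewrite chainT_succ // -IH'.
set w := vt t.+1.
pose c := B cs i w (kf cs (vt t)).
pose side := fun v => B cs i w (kf cs v) == c.
have Hside : forall k, (k < size cs)%N ->
    (forall v, v \in clq cs k -> v != w -> side v) \/
    (forall v, v \in clq cs k -> v != w -> ~~ side v).
  move=> k kN; case: (boolP (B cs i w k == c)) => hk; [left|right] => v vk vw;
    by rewrite /side (B_clq hb i kN vk vw).
have tm' : (t < m)%N by lia.
have [k1 k1N /andP[a1 b1]] := edge_clq hb (P_edge sp tm').
have [k2 k2N /andP[a2 b2]] := edge_clq hb (P_edge sp tm).
have nprev : vt t != w by apply: vt_neq; lia.
have nnext : vt t.+2 != w by apply: vt_neq; lia.
have n02 : vt t != vt t.+2 by apply: vt_neq; lia.
have wJ : w \in Pset t.+1 by apply: vt_Pset; lia.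
have wK : w \in [set w; vt t.+2] by rewrite finset.in_set2 eqxx.
have HJ : forall v, v \in Pset t.+1 -> (v == w) || side v.
  move=> v /inPset [r] rt ->.
  case: (ltngtP r t.+1) => [rlt||->]; last by rewrite eqxx.
  - have s1 : B cs i w (kf cs (vt r)) = B cs i w (kf cs (vt 0)).
      by apply: side_const; lia.
    have s2 : B cs i w (kf cs (vt t)) = B cs i w (kf cs (vt 0)).
      by apply: side_const; lia.
    by apply/orP; right; rewrite /side /c s1 s2.
  - by move=> h; exfalso; lia.
have HK : forall v, v \in [set w; vt t.+2] -> (v == w) || ~~ side v.
  move=> v; rewrite finset.in_set2 => /orP[->//|/eqP ->]; apply/orP; right.
  rewrite /side /c (B_clq hb i k2N b2 nnext) (B_clq hb i k1N a1 nprev).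
  apply: (B_neq hb i k2N k1N a2 b1); apply/eqP => k21.
  have := P_nonadj sp tm; apply/negP; apply/negPn.
  case: hb => _ _ hcl _ _.
  have : clq cs k1 \in cs by apply: mem_nth.
  move/hcl => [cl _]; apply: cl => //.
  by rewrite -k21.
have := sepE gc gm gb Hside oy wJ wK HJ HK.
rewrite -Pset_succ // => <-.
by rewrite addrK.
Qed.

End Main.

Local Open Scope classical_set_scope.
Local Open Scope ring_scope.

Theorem lemma2 (R : realType) (V : finType) (e : rel V) (cs : seq {set V})
    (f g : (V -> R) -> R) (i j : V) (p : seq V) (a b : R) :
  gauge_of f g -> cont_nonneg_on_orthant g ->
  std_exp_margins g ->
  block_graph e cs -> block_GEGM cs g ->
  i != j -> shortest_path e i j p ->
  0 <= a -> 0 <= b ->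
  (forall y : V -> R, orthant y -> y i = a -> y j = b ->
      marg g [set i; j] y <= chain_obj g i p y) /\
  (exists y : V -> R, [/\ orthant y, y i = a, y j = b &
      chain_obj g i p y = marg g [set i; j] y]).
Proof.
move=> _ gc gm hbg gb ij sp a0 b0.
have hm := m_pos ij sp.
have chainE : forall y, orthant y -> chain_obj g i p y = marg g (Pset i p (size p)) y.
  move=> y oy; rewrite (key gc gm hbg gb ij sp oy); last by rewrite hm leqnn.
  by rewrite /chain_obj /chainT.
have part1 : forall y, orthant y -> marg g [set i; j] y <= chain_obj g i p y.
  move=> y oy; rewrite chainE //; apply: (marg_mono gc gm) => //.
  apply/fintype.subsetP => x; rewrite finset.in_set2 => /orP[]/eqP->.
    by have := vt_Pset sp (leq0n (size p)) (leqnn _).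
  by rewrite -{1}(P_last sp); apply: (vt_Pset sp (leqnn _) (leqnn _)).
split; first by move=> y oy _ _; exact: part1.
pose x0 := fun v => if v == i then a else b.
have ox0 : orthant x0 by move=> v; rewrite /x0; case: ifP.
have [y [oy ay gy]] := marg_attain gc gm [set i; j] ox0.
exists y; split => //.
- by rewrite ay ?finset.in_set2 ?eqxx // /x0 eqxx.
- by rewrite ay ?finset.in_set2 ?eqxx ?orbT // /x0 eq_sym (negbTE ij).
- apply/eqP; rewrite eq_le part1 // andbT chainE //.
  have -> : marg g [set i; j] y = g y.
    by rewrite gy; apply: marg_local => k kJ; rewrite ay.
  by apply: marg_le => // k.
Qed.
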